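(* Let $T$ be a complete $\omega$-stable first-order theory in a countable language with infinite models. Let $\mathbf{C}$ be a class of dependence structures containing the forking dependence structure $\mathcal{D}_{(\mathcal{M},\,\text{fork})}$ of some $\mathcal{M}\models T$ such that $\emptyset\neq\mathrm{acl}(\emptyset)\neq M$ in $\mathcal{M}$. Then for every set $\Sigma$ of dependence atoms over $V$ and every dependence atom $\phi$ over $V$, $$\Sigma\vdash_{\mathcal{D}}\phi\iff\Sigma\models_{\mathbf{C}}\phi.$$
   Context: Fix a countably infinite set $V$ of variables. A dependence atom is $\mathrm{dep}(\vec x,\vec y)$ with $\vec x,\vec y$ finite sequences from $V$, $\vec y\neq\emptyset$ whenever $\vec x\neq\emptyset$. $\Sigma\vdash_{\mathcal{D}}\phi$ means $\phi$ lies in the smallest set of dependence atoms containing $\Sigma$ closed under: (a) $\mathrm{dep}(\vec x,\vec x)$ (including $\mathrm{dep}(\emptyset,\emptyset)$); (b) from $\mathrm{dep}(\vec x,\vec y\vec z)$ infer $\mathrm{dep}(\vec x\vec u,\vec y)$; (c) from $\mathrm{dep}(\vec x,\vec y)$, $\mathrm{dep}(\vec y,\vec z)$ infer $\mathrm{dep}(\vec x,\vec z)$; (d) from $\mathrm{dep}(\vec x,\vec y)$, $\mathrm{dep}(\vec x,\vec v)$ infer $\mathrm{dep}(\vec x,\vec y\vec v)$; (e) from $\mathrm{dep}(\vec x,\vec y)$ infer $\mathrm{dep}(\vec z,\vec y)$ for permutations $\vec z$ of $\vec x$. A dependence structure is $(I,\Rightarrow)$, $\Rightarrow$ a binary relation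 on finite subsets of $I$ with (D1) $\mathbf{x}\Rightarrow\mathbf{x}$; (D2) $\mathbf{x}\Rightarrow\mathbf{y}\cup\mathbf{z}$ implies $\mathbf{x}\cup\mathbf{u}\Rightarrow\mathbf{y}$; (D3) transitivity; (D4) $\mathbf{x}\Rightarrow\mathbf{y}$ and $\mathbf{x}\Rightarrow\mathbf{z}$ imply $\mathbf{x}\Rightarrow\mathbf{y}\cup\mathbf{z}$. Assignments $s:V\to I$, $s((x_0,\dots,x_{n-1}))=\{s(x_0),\dots,s(x_{n-1})\}$; $s$ satisfies $\mathrm{dep}(\vec x,\vec y)$ iff $s(\vec x)\Rightarrow s(\vec y)$; $\Sigma\models_{\mathbf{C}}\phi$ means every assignment into every structure of $\mathbf{C}$ satisfying $\Sigma$ satisfies $\phi$. Forking independence: $A\mathrel{\smile\!\!\!\!|}_C B$ iff for every finite tuple $\vec c$ from $A$, $\mathrm{RM}(\mathrm{tp}(\vec c/C\cup B))=\mathrm{RM}(\mathrm{tp}(\vec c/C))$ (RM = Morley rank). The forking dependence structure of $\mathcal{M}$ is $(M,\Rightarrow)$ with $\mathbf{x}\Rightarrow\mathbf{y}$ iff $\mathbf{y}\mathrel{\smile\!\!\!\!|}_{\mathbf{x}}\mathbf{y}$. $\mathrm{acl}$ denotes model-theoretic algebraic closure in $\mathcal{M}$. *)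

(* Defs.v *)
From Stdlib Require Import Arith List Permutation.
From Stdlib Require Vectors.Fin.

Record Lang : Type := {
  Fsym : Type;              (* function symbols (constants = arity 0) *)
  Rsym : Type;
  farity : Fsym -> nat;
  rarity : Rsym -> nat }.

Definition countable_lang (L : Lang) : Prop :=
  (exists f : Fsym L -> nat, forall a b, f a = f b -> a = b) /\
  (exists g : Rsym L -> nat, forall a b, g a = g b -> a = b).

Inductive term (L : Lang) : Type :=
| tvar : nat -> term L
| tapp : forall f : Fsym L, (Fin.t (farity L f) -> term L) -> term L.
Arguments tvar {L} _.
Arguments tapp {L} _ _.

Inductive form (L : Lang) : Type :=
| fEq  : term L -> term L -> form L
| fRel : forall r : Rsym L, (Fin.t (rarity L r) -> term L) -> form L
| fBot : form L
| fImp : form L -> form L -> form L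
| fAll : nat -> form L -> form L.
Arguments fEq {L} _ _.
Arguments fRel {L} _ _.
Arguments fBot {L}.
Arguments fImp {L} _ _.
Arguments fAll {L} _ _.

Definition fNot {L} (p : form L) : form L := fImp p fBot.

Fixpoint tfv {L} (t : term L) (k : nat) : Prop :=
  match t with
  | tvar n => k = n
  | tapp f a => exists i, tfv (a i) k
  end.

Fixpoint fv {L} (p : form L) (k : nat) : Prop :=
  match p with
  | fEq t1 t2 => tfv t1 k \/ tfv t2 k
  | fRel r a => exists i, tfv (a i) k
  | fBot => False
  | fImp p1 p2 => fv p1 k \/ fv p2 k
  | fAll x p1 => fv p1 k /\ k <> x
  end.

Definition sentence {L} (p : form L) : Prop := forall k, ~ fv p k.

Record Structure (L : Lang) : Type := {
  dom : Type;
  fint : forall f : Fsym L, (Fin.t (farity L f) -> dom) -> dom;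
  rint : forall r : Rsym L, (Fin.t (rarity L r) -> dom) -> Prop }.
Arguments dom {L} _.
Arguments fint {L} _ _ _.
Arguments rint {L} _ _ _.

Fixpoint teval {L} (M : Structure L) (s : nat -> dom M) (t : term L) : dom M :=
  match t with
  | tvar n => s n
  | tapp f a => fint M f (fun i => teval M s (a i))
  end.

Definition upd {D : Type} (s : nat -> D) (x : nat) (d : D) : nat -> D :=
  fun k => if Nat.eqb k x then d else s k.

Fixpoint sat {L} (M : Structure L) (s : nat -> dom M) (p : form L) : Prop :=
  match p with
  | fEq t1 t2 => teval M s t1 = teval M s t2
  | fRel r a => rint M r (fun i => teval M s (a i))
  | fBot => False
  | fImp p1 p2 => sat M s p1 -> sat M s p2
  | fAll x p1 => forall d : dom M, sat M (upd s x d) p1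
  end.

Definition is_theory {L} (T : form L -> Prop) : Prop :=
  forall p, T p -> sentence p.

Definition model {L} (T : form L -> Prop) (M : Structure L) : Prop :=
  inhabited (dom M) /\ forall p, T p -> forall s, sat M s p.

Definition complete_theory {L} (T : form L -> Prop) : Prop :=
  (exists M : Structure L, model T M) /\
  forall p, sentence p ->
    (forall M : Structure L, model T M -> forall s, sat M s p) \/
    (forall M : Structure L, model T M -> forall s, sat M s (fNot p)).

Definition infinite_type (D : Type) : Prop :=
  ~ exists l : list D, forall d, In d l.

Definition has_infinite_model {L} (T : form L -> Prop) : Prop :=
  exists M : Structure L, model T M /\ infinite_type (dom M).

Definition elem_emb {L} (M N : Structure L) (j : dom M -> dom N) : Prop :=
  forall (p : form L) (s : nat -> dom M),
    sat M s p <-> sat N (fun k => j (s k)) p.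

Definition asg {D : Type} (n : nat) (v : Fin.t n -> D) (e : nat -> D) (k : nat) : D :=
  match lt_dec k n with
  | left h => v (Fin.of_nat_lt h)
  | right _ => e k
  end.

(* (p, e) is a formula in the variables x_0..x_{n-1} with parameters in A *)
Definition over {L} {D : Type} (A : D -> Prop) (n : nat) (p : form L) (e : nat -> D) : Prop :=
  forall k, fv p k -> n <= k -> A (e k).

Definition asg1 {D : Type} (b : D) (e : nat -> D) : nat -> D := asg 1 (fun _ => b) e.

Definition omega_saturated {L} (N : Structure L) : Prop :=
  forall (A : list (dom N)) (P : form L -> (nat -> dom N) -> Prop),
    (forall p e, P p e -> over (fun a => In a A) 1 p e) ->
    (forall l : list (form L * (nat -> dom N)),
        (forall q, In q l -> P (fst q) (snd q)) ->
        exists b, forall q, In q l -> sat N (asg1 b (snd q)) (fst q)) ->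
    exists b, forall p e, P p e -> sat N (asg1 b e) p.

Definition countable_set {D : Type} (A : D -> Prop) : Prop :=
  exists f : nat -> D, forall a, A a -> exists k, f k = a.

(* omega-stability: over every countable subset A of a model there are only
   countably many complete 1-types (types realized in elementary extensions). *)
Definition omega_stable {L} (T : form L -> Prop) : Prop :=
  forall N : Structure L, model T N ->
  forall A : dom N -> Prop, countable_set A ->
  exists P : nat -> (form L -> (nat -> dom N) -> Prop),
    forall (N' : Structure L) (j : dom N -> dom N'), elem_emb N N' j ->
    forall b : dom N', exists k, forall p e, over A 1 p e ->
      (sat N' (asg1 b (fun i => j (e i))) p <-> P k p e).

Definition acl0 {L} (M : Structure L) (a : dom M) : Prop :=
  exists (p : form L) (s : nat -> dom M),
    (forall k, fv p k -> k = 0) /\ sat M (upd s 0 a) p /\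
    exists l : list (dom M), forall b, sat M (upd s 0 b) p -> In b l.

Inductive Ord : Type :=
| OZ : Ord
| OS : Ord -> Ord
| OL : (nat -> Ord) -> Ord.

Definition definable {L} (N : Structure L) (n : nat)
  (X : (Fin.t n -> dom N) -> Prop) : Prop :=
  exists (p : form L) (e : nat -> dom N), forall v, X v <-> sat N (asg n v e) p.

Fixpoint RMge {L} (N : Structure L) (n : nat)
  (X : (Fin.t n -> dom N) -> Prop) (a : Ord) : Prop :=
  match a with
  | OZ => exists v, X v
  | OS b => exists Y : nat -> ((Fin.t n -> dom N) -> Prop),
      (forall i, definable N n (Y i)) /\
      (forall i v, Y i v -> X v) /\
      (forall i i' v, i <> i' -> Y i v -> Y i' v -> False) /\
      (forall i, RMge N n (Y i) b)
  | OL f => forall k, RMge N n X (f k)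
  end.

(* RM(tp(c / C)) >= a, where M is an elementary substructure of the
   omega-saturated N via j: the minimum of the ranks of the formulas of the type *)
Definition tpRMge {L} (M N : Structure L) (j : dom M -> dom N)
  (n : nat) (c : Fin.t n -> dom M) (C : dom M -> Prop) (a : Ord) : Prop :=
  forall (p : form L) (e : nat -> dom M),
    over C n p e -> sat M (asg n c e) p ->
    RMge N n (fun v => sat N (asg n v (fun k => j (e k))) p) a.

Definition findep {L} (M N : Structure L) (j : dom M -> dom N)
  (A C B : dom M -> Prop) : Prop :=
  forall (n : nat) (c : Fin.t n -> dom M), (forall i, A (c i)) ->
  forall a : Ord,
    tpRMge M N j n c (fun x => C x \/ B x) a <-> tpRMge M N j n c C a.

Record DS : Type := {
  dcar : Type;
  ddep : (dcar -> Prop) -> (dcar -> Prop) -> Prop }.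

Definition finite_set {D : Type} (X : D -> Prop) : Prop :=
  exists l : list D, forall x, X x <-> In x l.

Definition cup {D : Type} (X Y : D -> Prop) : D -> Prop := fun a => X a \/ Y a.

(* (I, =>) is a dependence structure: => is a relation on finite subsets of I
   (subsets represented extensionally as predicates) satisfying D1-D4 *)
Definition is_DS (D : DS) : Prop :=
  (forall x x' y y' : dcar D -> Prop,
      (forall a, x a <-> x' a) -> (forall a, y a <-> y' a) ->
      ddep D x y -> ddep D x' y') /\
  (forall x, finite_set x -> ddep D x x) /\
  (forall x y z u, finite_set x -> finite_set y -> finite_set z -> finite_set u ->
      ddep D x (cup y z) -> ddep D (cup x u) y) /\
  (forall x y z, finite_set x -> finite_set y -> finite_set z ->
      ddep D x y -> ddep D y z -> ddep D x z) /\
  (forall x y z, finite_set x -> finite_set y -> finite_set z ->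
      ddep D x y -> ddep D x z -> ddep D x (cup y z)).

Definition forkDS {L} (M N : Structure L) (j : dom M -> dom N) : DS :=
  {| dcar := dom M; ddep := fun x y => findep M N j y x y |}.

(* dependence atoms dep(xs, ys) over V = nat *)
Definition atom : Type := (list nat * list nat)%type.

Definition wf_atom (a : atom) : Prop := fst a <> nil -> snd a <> nil.

Inductive derivD (Sigma : atom -> Prop) : atom -> Prop :=
| dAx : forall a, Sigma a -> derivD Sigma a
| dRefl : forall x, derivD Sigma (x, x)
| dWeak : forall x y z u, derivD Sigma (x, y ++ z) ->
    wf_atom (x ++ u, y) -> derivD Sigma (x ++ u, y)
| dTrans : forall x y z, derivD Sigma (x, y) -> derivD Sigma (y, z) ->
    wf_atom (x, z) -> derivD Sigma (x, z)
| dUnion : forall x y v, derivD Sigma (x, y) -> derivD Sigma (x, v) ->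
    derivD Sigma (x, y ++ v)
| dPerm : forall x z y, derivD Sigma (x, y) -> Permutation x z ->
    derivD Sigma (z, y).

Definition sval {D : DS} (s : nat -> dcar D) (x : list nat) : dcar D -> Prop :=
  fun i => exists v, In v x /\ s v = i.

Definition satD {D : DS} (s : nat -> dcar D) (a : atom) : Prop :=
  ddep D (sval s (fst a)) (sval s (snd a)).

Definition entailsC (C : DS -> Prop) (Sigma : atom -> Prop) (phi : atom) : Prop :=
  forall D : DS, C D -> forall s : nat -> dcar D,
    (forall a, Sigma a -> satD s a) -> satD s phi.

(* Main.v *)
Require Import Defs.
From Stdlib Require Import Arith List Permutation Lia Classical ClassicalEpsilon FunctionalExtensionality FinFun.
From Stdlib Require Vectors.Fin.
Import ListNotations.

Section Syn.
Context {L : Lang}.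

Lemma tcoinc (M : Structure L) (t : term L) : forall s s',
  (forall k, tfv t k -> s k = s' k) -> teval M s t = teval M s' t.
Proof.
  induction t as [n | f a IH]; intros s s' H; simpl.
  - apply H; reflexivity.
  - f_equal. extensionality i. apply IH. intros k Hk. apply H. simpl. eauto.
Qed.

Lemma coinc (M : Structure L) (p : form L) : forall s s',
  (forall k, fv p k -> s k = s' k) -> (sat M s p <-> sat M s' p).
Proof.
  induction p; intros s s' H; simpl.
  - rewrite (tcoinc M t s s'), (tcoinc M t0 s s'); [tauto| |]; intros; apply H; simpl; auto.
  - replace (fun i => teval M s (t i)) with (fun i => teval M s' (t i)); [tauto|].
    extensionality i. symmetry. apply tcoinc. intros; apply H; simpl; eauto.
  - tauto.
  - rewrite (IHp1 s s'), (IHp2 s s'); [tauto| |]; intros; apply H; simpl; auto.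
  - split; intros Hs d; [rewrite <- (IHp (upd s n d)) | rewrite (IHp (upd s n d))]; auto;
    intros k Hk; unfold upd; destruct (Nat.eqb_spec k n); auto; apply H; simpl; auto.
Qed.

Fixpoint tren (pi : nat -> nat) (t : term L) : term L :=
  match t with
  | tvar n => tvar (pi n)
  | tapp f a => tapp f (fun i => tren pi (a i))
  end.

Fixpoint ren (pi : nat -> nat) (p : form L) : form L :=
  match p with
  | fEq t1 t2 => fEq (tren pi t1) (tren pi t2)
  | fRel r a => fRel r (fun i => tren pi (a i))
  | fBot => fBot
  | fImp p1 p2 => fImp (ren pi p1) (ren pi p2)
  | fAll x p1 => fAll (pi x) (ren pi p1)
  end.

Lemma tren_sem (M : Structure L) pi t s :
  teval M s (tren pi t) = teval M (fun k => s (pi k)) t.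
Proof.
  induction t as [n | f a IH]; simpl; auto. f_equal. extensionality i. apply IH.
Qed.

Lemma ren_sem (M : Structure L) pi (Hpi : forall x y, pi x = pi y -> x = y) p : forall s,
  sat M s (ren pi p) <-> sat M (fun k => s (pi k)) p.
Proof.
  induction p; intros s; simpl.
  - rewrite !tren_sem. tauto.
  - replace (fun i => teval M s (tren pi (t i))) with (fun i => teval M (fun k => s (pi k)) (t i)); [tauto|].
    extensionality i. symmetry; apply tren_sem.
  - tauto.
  - rewrite IHp1, IHp2. tauto.
  - assert (E : forall d, (fun k => upd s (pi n) d (pi k)) = upd (fun k => s (pi k)) n d).
    { intros d. extensionality k. unfold upd. destruct (Nat.eqb_spec k n); subst.
      - rewrite Nat.eqb_refl; auto.
      - destruct (Nat.eqb_spec (pi k) (pi n)); auto. exfalso; auto. }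
    split; intros Hs d; specialize (Hs d); [rewrite IHp, E in Hs | rewrite IHp, E]; auto.
Qed.

Lemma tren_fv pi t k : tfv (tren pi t) k -> exists k', tfv t k' /\ k = pi k'.
Proof.
  induction t as [n | f a IH]; simpl; intros H.
  - subst; eauto.
  - destruct H as [i Hi]. destruct (IH i Hi) as [k' [H1 H2]]. eauto.
Qed.

Lemma ren_fv pi p k : fv (ren pi p) k -> exists k', fv p k' /\ k = pi k'.
Proof.
  revert k; induction p; simpl; intros k H.
  - destruct H as [H|H]; apply tren_fv in H; destruct H as [k' [? ?]]; eauto.
  - destruct H as [i Hi]. apply tren_fv in Hi. destruct Hi as [k' [? ?]]; eauto.
  - contradiction.
  - destruct H as [H|H]; [apply IHp1 in H|apply IHp2 in H]; destruct H as [k' [? ?]]; eauto.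
  - destruct H as [H1 H2]. apply IHp in H1. destruct H1 as [k' [? ?]]. subst.
    exists k'. split; auto.
Qed.

Fixpoint finmax (n : nat) : (Fin.t n -> nat) -> nat :=
  match n with
  | 0 => fun _ => 0
  | S m => fun g => Nat.max (g Fin.F1) (finmax m (fun i => g (Fin.FS i)))
  end.

Lemma finmax_ge n (g : Fin.t n -> nat) i : g i <= finmax n g.
Proof.
  induction i; simpl; [lia|]. specialize (IHi (fun i => g (Fin.FS i))). simpl in IHi. lia.
Qed.

Fixpoint tbound (t : term L) : nat :=
  match t with
  | tvar n => S n
  | tapp f a => finmax _ (fun i => tbound (a i))
  end.

Fixpoint fbound (p : form L) : nat :=
  match p with
  | fEq t1 t2 => Nat.max (tbound t1) (tbound t2)
  | fRel r a => finmax _ (fun i => tbound (a i))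
  | fBot => 0
  | fImp p1 p2 => Nat.max (fbound p1) (fbound p2)
  | fAll x p1 => fbound p1
  end.

Lemma tbound_ok t k : tfv t k -> k < tbound t.
Proof.
  induction t as [n | f a IH]; simpl; intros H; [lia|].
  destruct H as [i Hi]. specialize (IH i Hi).
  pose proof (finmax_ge _ (fun i => tbound (a i)) i). simpl in H. lia.
Qed.

Lemma fbound_ok p k : fv p k -> k < fbound p.
Proof.
  induction p; simpl; intros H.
  - destruct H as [H|H]; apply tbound_ok in H; lia.
  - destruct H as [i Hi]. apply tbound_ok in Hi.
    pose proof (finmax_ge _ (fun i => tbound (t i)) i). simpl in H. lia.
  - contradiction.
  - destruct H as [H|H]; [apply IHp1 in H|apply IHp2 in H]; lia.
  - destruct H; auto.
Qed.

Definition fTop : form L := fImp fBot fBot.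
Definition fAnd (p q : form L) : form L := fNot (fImp p (fNot q)).
Definition fEx (x : nat) (p : form L) : form L := fNot (fAll x (fNot p)).
Fixpoint ANDL (l : list (form L)) : form L :=
  match l with [] => fTop | p :: l' => fAnd p (ANDL l') end.
Fixpoint ORL (l : list (form L)) : form L :=
  match l with [] => fBot | p :: l' => fImp (fNot p) (ORL l') end.
Fixpoint EXS (ys : list nat) (p : form L) : form L :=
  match ys with [] => p | y :: ys' => fEx y (EXS ys' p) end.

Lemma sat_and M s p q : sat M s (fAnd p q) <-> sat M s p /\ sat M s q.
Proof. simpl. tauto. Qed.
Lemma sat_ex M s x p : sat M s (fEx x p) <-> exists d, sat M (upd s x d) p.
Proof. simpl. split.
  - intros H. apply NNPP. intros H'. apply H. intros d Hd. apply H'. eauto.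
  - intros [d Hd] H. exact (H d Hd).
Qed.
Lemma sat_ANDL M s l : sat M s (ANDL l) <-> forall p, In p l -> sat M s p.
Proof. induction l. - simpl. split; [tauto|auto].
  - cbn [ANDL]. rewrite sat_and, IHl. simpl. split; [intros [H1 H2] p [<-|Hp]; auto| intros H; split; auto]. Qed.
Lemma sat_ORL M s l : sat M s (ORL l) <-> exists p, In p l /\ sat M s p.
Proof. induction l; simpl.
  - split; [tauto| intros [p [[] _]]].
  - rewrite IHl. split.
    + intros H. destruct (classic (sat M s a)) as [Ha|Ha]; [eauto|].
      destruct (H Ha) as [p [? ?]]; eauto.
    + intros [p [[<-|Hp] Hs]] Hn; [contradiction|eauto].
Qed.

Fixpoint setl {D : Type} (s : nat -> D) (ys : list nat) (ds : list D) : nat -> D :=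
  match ys, ds with
  | y :: ys', d :: ds' => setl (upd s y d) ys' ds'
  | _, _ => s
  end.

Lemma EXS_intro M ys : forall s ds p, sat M (setl s ys ds) p -> length ys = length ds -> sat M s (EXS ys p).
Proof.
  induction ys as [|y ys IH]; intros s ds p H Hl; simpl in *; auto.
  destruct ds as [|d ds]; simpl in *; try discriminate.
  apply sat_ex. exists d. eapply IH; eauto.
Qed.

Lemma EXS_elim M ys : forall s p, sat M s (EXS ys p) ->
  exists s', (forall k, ~ In k ys -> s' k = s k) /\ sat M s' p.
Proof.
  induction ys as [|y ys IH]; intros s p H; simpl in *.
  - exists s; auto.
  - apply sat_ex in H. destruct H as [d Hd]. apply IH in Hd. destruct Hd as [s' [H1 H2]].
    exists s'; split; auto. intros k Hk. rewrite H1 by tauto. unfold upd.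
    destruct (Nat.eqb_spec k y); auto. exfalso; auto.
Qed.

Lemma setl_out {D} ys : forall (s : nat -> D) ds k, ~ In k ys -> setl s ys ds k = s k.
Proof.
  induction ys; intros s ds k H; destruct ds; simpl; auto.
  rewrite IHys by (simpl in H; tauto). unfold upd. destruct (Nat.eqb_spec k a); auto.
  exfalso; simpl in H; auto.
Qed.

Lemma setl_in {D} ys : forall (s : nat -> D) ds d, NoDup ys -> length ys = length ds ->
  In d ds -> exists y, In y ys /\ setl s ys ds y = d.
Proof.
  induction ys; intros s ds d Hn Hl Hd; destruct ds; simpl in *; try discriminate; try contradiction.
  inversion Hn; subst. destruct Hd as [<-|Hd].
  - exists a. split; auto. rewrite setl_out by auto. unfold upd. rewrite Nat.eqb_refl; auto.
  - destruct (IHys (upd s a d0) ds d) as [y [? ?]]; auto. exists y; auto.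
Qed.

Lemma setl_rep {D} ys : forall (s : nat -> D) d y, In y ys -> setl s ys (repeat d (length ys)) y = d.
Proof.
  induction ys; intros s d y H; simpl in *; [contradiction|].
  destruct (in_dec Nat.eq_dec y ys); [auto|].
  destruct H as [<-|H]; [|contradiction]. rewrite setl_out by auto. unfold upd. rewrite Nat.eqb_refl; auto.
Qed.

Lemma fv_and p q k : fv (fAnd p q) k -> fv p k \/ fv q k.
Proof. simpl. tauto. Qed.
Lemma fv_ex x p k : fv (fEx x p) k -> fv p k /\ k <> x.
Proof. simpl. tauto. Qed.
Lemma fv_ANDL l k : fv (ANDL l) k -> exists p, In p l /\ fv p k.
Proof. induction l; simpl; [tauto|]. intros [[H|[H|[]]]|[]]; eauto.
  destruct (IHl H) as [p [? ?]]; eauto. Qed.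
Lemma fv_ORL l k : fv (ORL l) k -> exists p, In p l /\ fv p k.
Proof. induction l; simpl; [tauto|]. intros [[H|[]]|H]; eauto.
  destruct (IHl H) as [p [? ?]]; eauto. Qed.
Lemma fv_EXS ys p k : fv (EXS ys p) k -> fv p k /\ ~ In k ys.
Proof. induction ys; simpl; [tauto|]. intros [[[H|[]] ?]|[]]. apply IHys in H. intuition. Qed.

End Syn.

Lemma asg_ge {D} n (v : Fin.t n -> D) e k : n <= k -> asg n v e k = e k.
Proof. intros H. unfold asg. destruct (lt_dec k n); auto. lia. Qed.

Lemma asg_fin {D} n (v : Fin.t n -> D) e i : asg n v e (proj1_sig (Fin.to_nat i)) = v i.
Proof. unfold asg. destruct (lt_dec _ n) as [h|h].
  - rewrite (Fin.of_nat_ext h (proj2_sig (Fin.to_nat i))). rewrite Fin.of_nat_to_nat_inv; auto.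
  - exfalso. apply h. apply proj2_sig.
Qed.

Lemma asg_lt_indep {D} n (v : Fin.t n -> D) e e' k : k < n -> asg n v e k = asg n v e' k.
Proof. intros H. unfold asg. destruct (lt_dec k n); auto. lia. Qed.

Lemma asg_map {D D'} (j : D -> D') n (v : Fin.t n -> D) e :
  (fun k => j (asg n v e k)) = asg n (fun i => j (v i)) (fun k => j (e k)).
Proof. extensionality k. unfold asg. destruct (lt_dec k n); auto. Qed.

Lemma asg1_0 {D} (v : Fin.t 1 -> D) e : asg 1 v e 0 = v Fin.F1.
Proof. exact (asg_fin 1 v e Fin.F1). Qed.

Lemma fin1_ext {D} (v w : Fin.t 1 -> D) : v Fin.F1 = w Fin.F1 -> v = w.
Proof. intros H. extensionality i. pattern i. apply Fin.caseS'; auto. intro p. inversion p. Qed.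

Lemma cover {D} n : forall (Lc : Fin.t n -> list D), exists cl : list (Fin.t n -> D),
  forall v, (forall i, In (v i) (Lc i)) -> In v cl.
Proof.
  induction n as [|n IH]; intros Lc.
  - exists [fun i => Fin.case0 (fun _ => D) i]. intros v _. left. extensionality i. apply Fin.case0. exact i.
  - destruct (IH (fun i => Lc (Fin.FS i))) as [cl Hcl].
    exists (flat_map (fun x => map (fun w => fun i => Fin.caseS' i (fun _ => D) x w) cl) (Lc Fin.F1)).
    intros v Hv. apply in_flat_map. exists (v Fin.F1). split; auto.
    apply in_map_iff. exists (fun i => v (Fin.FS i)). split.
    + extensionality i. pattern i. apply Fin.caseS'; reflexivity.
    + apply Hcl. intros i. apply Hv.
Qed.

Fixpoint Zo (o : Ord) : Prop :=
  match o with OZ => True | OS _ => False | OL f => forall k, Zo (f k) end.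

Section Rank.
Context {L : Lang} (N : Structure L).

Lemma RMge_ne n o : forall X, RMge N n X o -> exists v, X v.
Proof.
  induction o as [|o IH|f IH]; simpl; intros X H; auto.
  - destruct H as [Y [_ [HY [_ HR]]]]. destruct (IH _ (HR 0)) as [v Hv]. eauto.
  - apply (IH 0). auto.
Qed.

Lemma Zo_RMge n o : forall X, Zo o -> (exists v, X v) -> RMge N n X o.
Proof. induction o; simpl; intros X Hz Hx; auto. contradiction. Qed.

Lemma fin_RMge n o : forall X, RMge N n X o -> (exists l, forall v, X v -> In v l) -> Zo o.
Proof.
  induction o as [|o IH|f IH]; simpl; intros X H Hl; auto.
  - destruct H as [Y [_ [HY [Hd HR]]]]. destruct Hl as [l Hl].
    assert (Hc : forall i, exists v, Y i v) by (intro i; apply (RMge_ne n o), HR).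
    set (vs := fun i => proj1_sig (constructive_indefinite_description _ (Hc i))).
    assert (Hvs : forall i, Y i (vs i)) by (intro i; exact (proj2_sig (constructive_indefinite_description _ (Hc i)))).
    assert (Inj : Injective vs).
    { intros i i' E. destruct (Nat.eq_dec i i'); auto. exfalso.
      apply (Hd i i' (vs i)); auto. rewrite E; auto. }
    pose proof (@NoDup_incl_length _ (map vs (seq 0 (S (length l)))) l) as H.
    rewrite length_map, length_seq in H. cut (S (length l) <= length l); [lia|].
    apply H. apply Injective_map_NoDup; auto. apply seq_NoDup.
    intros v Hv. apply in_map_iff in Hv. destruct Hv as [i [<- _]]. eauto.
  - intros k. eapply IH; eauto.
Qed.
End Rank.

Section MT.
Context {L : Lang} (M N : Structure L) (j : dom M -> dom N) (HE : elem_emb M N j).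

Lemma j_inj x y : j x = j y -> x = y.
Proof.
  intros H. set (s := fun k => if Nat.eqb k 0 then x else y).
  pose proof (proj2 (HE (fEq (tvar 0) (tvar 1)) s)) as H'. simpl in H'. apply H'. exact H.
Qed.

Lemma preimage (l : list (dom N)) : forall P : dom M -> Prop,
  (forall b, P b -> In (j b) l) -> exists l0, forall b, P b -> In b l0.
Proof.
  induction l as [|y l IH]; intros P H.
  - exists []. intros b Hb. apply H in Hb. contradiction.
  - destruct (classic (exists b0, j b0 = y)) as [[b0 Hb0]|Hn].
    + destruct (IH (fun b => P b /\ b <> b0)) as [l0 Hl0].
      { intros b [Hb Hne]. destruct (H b Hb) as [E|E]; auto. subst. exfalso. apply Hne. apply j_inj; auto. }
      exists (b0 :: l0). intros b Hb. destruct (classic (b = b0)); [left; auto|right; auto].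
    + destruct (IH P) as [l0 Hl0]; [|eauto].
      intros b Hb. destruct (H b Hb) as [E|E]; auto. exfalso; eauto.
Qed.

Lemma over_mono (C C' : dom M -> Prop) n (p : form L) e :
  over C n p e -> (forall x, C x -> C' x) -> over C' n p e.
Proof. unfold over; eauto. Qed.

Lemma tp_fin n c (C : dom M -> Prop) :
  (exists p e, over C n p e /\ sat M (asg n c e) p /\
     exists l, forall v, sat N (asg n v (fun k => j (e k))) p -> In v l) ->
  forall o, tpRMge M N j n c C o <-> Zo o.
Proof.
  intros [p [e [Ho [Hs Hl]]]] o. split.
  - intros H. eapply fin_RMge; [apply H; eauto| exact Hl].
  - intros Hz p' e' Ho' Hs'. apply Zo_RMge; auto. exists (fun i => j (c i)).
    rewrite <- asg_map. apply HE. auto.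
Qed.

Variable a : dom M.
Variable q : form L.
Hypothesis Hqfv : forall k, fv q k -> k = 0.
Hypothesis Qa : forall s, s 0 = a -> sat M s q.
Variable lq : list (dom M).
Hypothesis QN : forall s, sat N s q -> In (s 0) (map j lq).
Hypothesis QM : forall s, sat M s q -> In (s 0) lq.

Lemma ren_q_sem (K : Structure L) s i : sat K s (ren (fun k => k + i) q) <-> sat K (fun _ => s i) q.
Proof.
  rewrite ren_sem by (intros; lia). apply coinc. intros k Hk. apply Hqfv in Hk. subst. reflexivity.
Qed.

Lemma pos_formula (X : dom M -> Prop) n (c : Fin.t n -> dom M) :
  (forall i, c i = a \/ X (c i)) ->
  exists p e, over X n p e /\ sat M (asg n c e) p /\
     exists l, forall v, sat N (asg n v (fun k => j (e k))) p -> In v l.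
Proof.
  intros Hc.
  set (cn := asg n c (fun _ => a)).
  set (psi := fun i => if excluded_middle_informative (X (cn i)) then fEq (tvar i) (tvar (n+i))
                       else ren (fun k => k + i) q).
  set (e := fun k => cn (k - n)).
  assert (He : forall i, e (n + i) = cn i) by (intro i; unfold e; f_equal; lia).
  exists (ANDL (map psi (seq 0 n))), e. split; [|split].
  - intros k Hk Hnk. apply fv_ANDL in Hk. destruct Hk as [p [Hp Hk]].
    apply in_map_iff in Hp. destruct Hp as [i [<- Hi]]. apply in_seq in Hi.
    unfold psi in Hk. destruct (excluded_middle_informative (X (cn i))) as [Hx|Hx].
    + simpl in Hk. destruct Hk as [Hk|Hk]; [lia|]. subst. rewrite He. auto.
    + apply ren_fv in Hk. destruct Hk as [k' [Hk' ->]]. apply Hqfv in Hk'. lia.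
  - apply sat_ANDL. intros p Hp. apply in_map_iff in Hp. destruct Hp as [i [<- Hi]]. apply in_seq in Hi.
    unfold psi. destruct (excluded_middle_informative (X (cn i))) as [Hx|Hx].
    + simpl. rewrite (asg_ge n c e (n+i)) by lia. rewrite He. unfold cn. apply asg_lt_indep. lia.
    + apply ren_q_sem. apply Qa. simpl. unfold cn in Hx.
      rewrite (asg_lt_indep n c e (fun _ => a)) by lia.
      assert (E : i = proj1_sig (Fin.to_nat (Fin.of_nat_lt (p:=i) (n:=n) ltac:(lia)))) by (rewrite Fin.to_nat_of_nat; reflexivity).
      rewrite E in Hx |- *. rewrite asg_fin in Hx |- *. destruct (Hc (Fin.of_nat_lt (p:=i) (n:=n) ltac:(lia))); tauto.
  - destruct (cover n (fun i => j (c i) :: map j lq)) as [cl Hcl]. exists cl.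
    intros v Hv. apply Hcl. intros i. rewrite sat_ANDL in Hv.
    set (k := proj1_sig (Fin.to_nat i)).
    assert (Hk : k < n) by (apply proj2_sig).
    assert (Hin : In (psi k) (map psi (seq 0 n))) by (apply in_map; apply in_seq; lia).
    specialize (Hv _ Hin). unfold psi in Hv.
    destruct (excluded_middle_informative (X (cn k))) as [Hx|Hx].
    + left. simpl in Hv. unfold k in Hv. rewrite asg_fin in Hv. rewrite Hv.
      rewrite asg_ge by lia. rewrite He. unfold cn. fold k. unfold k. rewrite asg_fin. auto.
    + right. apply ren_q_sem in Hv. apply QN in Hv. simpl in Hv. unfold k in Hv. rewrite asg_fin in Hv. auto.
Qed.

Lemma positive (X Y : dom M -> Prop) : (forall y, Y y -> y = a \/ X y) -> findep M N j Y X Y.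
Proof.
  intros HY n c Hc o.
  destruct (pos_formula X n c) as [p [e [Ho [Hs Hl]]]]; [intro i; apply HY, Hc|].
  rewrite !tp_fin; [tauto| |]; exists p, e; repeat split; auto.
  all: try (eapply over_mono; eauto; simpl; auto).
Qed.
End MT.

Lemma listcollect {D} (lq : list D) : forall (P : D -> D -> Prop), exists Lr, forall d v,
  In d lq -> (exists lc, forall v', P d v' -> In v' lc) -> P d v -> In v Lr.
Proof.
  induction lq as [|d0 lq IH]; intros P.
  - exists []. intros d v [].
  - destruct (IH P) as [Lr HLr].
    destruct (classic (exists lc, forall v', P d0 v' -> In v' lc)) as [[lc Hlc]|Hn].
    + exists (lc ++ Lr). intros d v [<-|Hd] Hc Hp; apply in_or_app; [left; auto|right; eauto].
    + exists Lr. intros d v [<-|Hd] Hc Hp; [contradiction|eauto].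
Qed.

Section Neg.
Context {L : Lang} (M N : Structure L) (j : dom M -> dom N) (HE : elem_emb M N j).

Lemma eqf_sem (K : Structure L) s x y : sat K s (fEq (tvar x) (tvar y)) <-> s x = s y.
Proof. simpl; tauto. Qed.

Lemma acl_facts a : acl0 M a -> exists q lq, (forall k, fv q k -> k = 0) /\
  (forall s, s 0 = a -> sat M s q) /\ (forall s, sat M s q -> In (s 0) lq) /\
  (forall s, sat N s q -> In (s 0) (map j lq)).
Proof.
  intros [q [s0 [Hfv [Ha [l Hl]]]]].
  assert (Qa : forall s, s 0 = a -> sat M s q).
  { intros s Hs. apply (coinc M q (upd s0 0 a)); auto. intros k Hk. apply Hfv in Hk. subst. auto. }
  assert (QM : forall s, sat M s q -> In (s 0) l).
  { intros s Hs. apply Hl. apply (coinc M q s); auto. intros k Hk. apply Hfv in Hk. subst. auto. }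
  exists q, l. repeat split; auto.
  set (ys := seq 1 (length l)).
  set (Phi := fAll 0 (fImp q (ORL (map (fun y => fEq (tvar 0) (tvar y)) ys)))).
  set (sM := fun k => nth (k - 1) l a).
  assert (HM : sat M sM Phi).
  { simpl. intros d Hq. apply QM in Hq. simpl in Hq.
    apply In_nth with (d := a) in Hq. destruct Hq as [i [Hi Ei]].
    apply sat_ORL. exists (fEq (tvar 0) (tvar (S i))). split.
    - apply in_map_iff. exists (S i). split; [reflexivity|]. apply in_seq. lia.
    - simpl. unfold upd, sM. simpl. rewrite Nat.sub_0_r. auto. }
  apply HE in HM. intros s Hs. simpl in HM.
  specialize (HM (s 0)).
  assert (Hq : sat N (upd (fun k => j (sM k)) 0 (s 0)) q).
  { apply (coinc N q s); auto. intros k Hk. apply Hfv in Hk. subst. auto. }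
  apply HM in Hq. apply sat_ORL in Hq. destruct Hq as [f [Hf Hs']].
  apply in_map_iff in Hf. destruct Hf as [y [<- Hy]]. apply in_seq in Hy.
  simpl in Hs'. unfold upd in Hs'. simpl in Hs'.
  destruct (Nat.eqb_spec y 0); [lia|]. rewrite Hs'. apply in_map. unfold sM. apply nth_In. lia.
Qed.

Lemma inf_RMge (S : (Fin.t 1 -> dom N) -> Prop) :
  (forall l, exists v, S v /\ ~ In v l) -> RMge N 1 S (OS OZ).
Proof.
  intros H.
  set (g := fun l => proj1_sig (constructive_indefinite_description _ (H l))).
  assert (Hg : forall l, S (g l) /\ ~ In (g l) l) by (intro l; exact (proj2_sig (constructive_indefinite_description _ (H l)))).
  set (hist := fix hist k := match k with 0 => [] | S k => g (hist k) :: hist k end).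
  set (w := fun k => g (hist k)).
  assert (Hh : forall k k', k < k' -> In (w k) (hist k')).
  { intros k k'. induction k' as [|k' IH]; intros Hk; [lia|]. simpl.
    destruct (Nat.eq_dec k k'); [subst; left; auto|right; apply IH; lia]. }
  assert (Hd : forall k k', k <> k' -> w k <> w k').
  { intros k k' Hne E. destruct (Nat.lt_ge_cases k k').
    - apply (proj2 (Hg (hist k'))). fold (w k'). rewrite <- E. apply Hh; auto.
    - apply (proj2 (Hg (hist k))). fold (w k). rewrite E. apply Hh; lia. }
  simpl. exists (fun i v => v = w i). split; [|split; [|split]].
  - intros i. exists (fEq (tvar 0) (tvar 1)), (fun _ => w i Fin.F1). intros v. simpl.
    rewrite asg1_0, asg_ge by lia. split; [intros ->; auto| apply fin1_ext].
  - intros i v ->. apply Hg.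
  - intros i i' v Hne -> E. apply (Hd i i'); auto.
  - intros i. eauto.
Qed.
End Neg.

Section Acl.
Context {L : Lang} (M : Structure L).
Variable a : dom M.
Variable q : form L.
Hypothesis Hqfv : forall k, fv q k -> k = 0.
Hypothesis Qa : forall s, s 0 = a -> sat M s q.
Variable lq : list (dom M).
Hypothesis QM : forall s, sat M s q -> In (s 0) lq.

Lemma make_acl (p : form L) (e : nat -> dom M) (b : dom M) (lM : list (dom M)) :
  (forall k, fv p k -> 1 <= k -> e k = a) ->
  sat M (asg1 b e) p ->
  (forall b', sat M (asg1 b' e) p -> In b' lM) ->
  acl0 M b.
Proof.
  intros Hpe Hb HlM.
  set (B := fbound p).
  set (K := seq 1 B).
  set (z := S B).
  set (ys := seq (S z) (length lM)).
  set (COV := EXS ys (fAll 0 (fImp p (ORL (map (fun y => fEq (tvar 0) (tvar y)) ys))))).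
  set (ANDEQ := ANDL (map (fun k => @fEq L (tvar k) (tvar z)) K)).
  set (r := fEx z (fAnd (ren (fun k => k + z) q) (EXS K (fAnd ANDEQ (fAnd p COV))))).
  assert (HpB : forall k, fv p k -> k < B) by (intros; apply fbound_ok; auto).
  assert (InK : forall k, In k K <-> 1 <= k < S B) by (intros k; unfold K; rewrite in_seq; lia).
  assert (Inys : forall k, In k ys <-> S z <= k < S z + length lM) by (intros k; unfold ys; rewrite in_seq; lia).
  exists r, (fun _ => a). split; [|split].
  -
    intros k Hk. unfold r in Hk. apply fv_ex in Hk. destruct Hk as [Hk Hkz].
    apply fv_and in Hk. destruct Hk as [Hk|Hk].
    + apply ren_fv in Hk. destruct Hk as [k' [Hk' ->]]. apply Hqfv in Hk'. subst. simpl in Hkz. lia.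
    + apply fv_EXS in Hk. destruct Hk as [Hk HkK]. rewrite InK in HkK.
      apply fv_and in Hk. destruct Hk as [Hk|Hk].
      * apply fv_ANDL in Hk. destruct Hk as [f [Hf Hk]]. apply in_map_iff in Hf.
        destruct Hf as [k' [<- Hk']]. rewrite InK in Hk'. simpl in Hk. unfold z in *. lia.
      * apply fv_and in Hk. destruct Hk as [Hk|Hk].
        -- apply HpB in Hk. lia.
        -- apply fv_EXS in Hk. destruct Hk as [Hk Hky]. rewrite Inys in Hky. simpl in Hk.
           destruct Hk as [[Hk|Hk] Hk0]; [apply HpB in Hk; lia|].
           apply fv_ORL in Hk. destruct Hk as [f [Hf Hk]]. apply in_map_iff in Hf.
           destruct Hf as [y [<- Hy]]. rewrite Inys in Hy. simpl in Hk. lia.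
  -
    unfold r. apply sat_ex. exists a. apply sat_and. split.
    + apply ren_q_sem; auto. apply Qa. unfold upd. rewrite Nat.eqb_refl. auto.
    + set (s0 := upd (upd (fun _ => a) 0 b) z a).
      apply (EXS_intro M K s0 (repeat a (length K))); [|symmetry; apply repeat_length].
      set (s1 := setl s0 K (repeat a (length K))).
      assert (Hs1K : forall k, In k K -> s1 k = a) by (intros; apply setl_rep; auto).
      assert (Hs1z : s1 z = a).
      { unfold s1. rewrite setl_out by (rewrite InK; unfold z; lia). unfold s0, upd. rewrite Nat.eqb_refl. auto. }
      assert (Hs10 : s1 0 = b).
      { unfold s1. rewrite setl_out by (rewrite InK; lia). unfold s0, upd. simpl. auto. }
      assert (HP : forall s, s 0 = b -> (forall k, 1 <= k < S B -> s k = a) -> sat M s p).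
      { intros s H0 H1. apply (coinc M p (asg1 b e)); auto. intros k Hk.
        destruct k as [|k].
        - rewrite H0. unfold asg1. apply asg1_0.
        - rewrite H1 by (apply HpB in Hk; lia). unfold asg1. rewrite asg_ge by lia.
          apply Hpe; auto; lia. }
      apply sat_and. split; [|apply sat_and; split].
      * apply sat_ANDL. intros f Hf. apply in_map_iff in Hf. destruct Hf as [k [<- Hk]].
        simpl. rewrite Hs1z, Hs1K; auto.
      * apply HP; auto. intros k Hk. apply Hs1K. apply InK. auto.
      * apply (EXS_intro M ys s1 lM); [|unfold ys; apply length_seq].
        set (s2 := setl s1 ys lM). simpl. intros d Hd.
        assert (HdM : In d lM).
        { apply HlM. apply (coinc M p (upd s2 0 d)); auto. intros k Hk.
          destruct k as [|k].
          - unfold upd. simpl. unfold asg1. rewrite asg1_0. auto.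
          - unfold upd. simpl. unfold s2. rewrite setl_out by (apply HpB in Hk; rewrite Inys; unfold z; lia).
            rewrite Hs1K by (apply InK; apply HpB in Hk; lia). unfold asg1. rewrite asg_ge by lia.
            symmetry; apply Hpe; auto; lia. }
        destruct (setl_in ys s1 lM d) as [y [Hy Ey]]; auto.
        { apply seq_NoDup. } { unfold ys; apply length_seq. }
        apply sat_ORL. exists (fEq (tvar 0) (tvar y)). split.
        -- apply in_map_iff. exists y. auto.
        -- simpl. unfold upd. simpl. rewrite Inys in Hy. destruct (Nat.eqb_spec y 0); [lia|]. fold s2. auto.
  -
    set (tz := fun (d v : dom M) k => if Nat.eqb k 0 then v else d).
    destruct (listcollect lq (fun d v => sat M (tz d v) p)) as [Lr HLr].
    exists Lr. intros v Hv. unfold r in Hv. apply sat_ex in Hv. destruct Hv as [d Hd].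
    apply sat_and in Hd. destruct Hd as [Hq Hd].
    apply ren_q_sem in Hq; auto. apply QM in Hq. simpl in Hq. unfold upd in Hq. rewrite Nat.eqb_refl in Hq.
    apply EXS_elim in Hd. destruct Hd as [s1 [Hs1 Hd]].
    apply sat_and in Hd. destruct Hd as [Heq Hd]. apply sat_and in Hd. destruct Hd as [Hp Hc].
    assert (Hs1z : s1 z = d).
    { rewrite Hs1 by (rewrite InK; unfold z; lia). unfold upd. rewrite Nat.eqb_refl. auto. }
    assert (Hs10 : s1 0 = v).
    { rewrite Hs1 by (rewrite InK; lia). unfold upd. simpl. auto. }
    assert (Hs1K : forall k, In k K -> s1 k = d).
    { intros k Hk. unfold ANDEQ in Heq; rewrite sat_ANDL in Heq. rewrite <- Hs1z.
      apply (Heq (fEq (tvar k) (tvar z))). apply in_map_iff; eauto. }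
    apply (HLr d v); auto.
    + apply EXS_elim in Hc. destruct Hc as [s2 [Hs2 Hc]].
      exists (map s2 ys). intros v' Hv'. simpl in Hc. specialize (Hc v').
      assert (Hp' : sat M (upd s2 0 v') p).
      { apply (coinc M p (tz d v')); auto. intros k Hk. destruct k as [|k]; [reflexivity|].
        unfold upd, tz. simpl. rewrite Hs2 by (apply HpB in Hk; rewrite Inys; unfold z; lia).
        rewrite Hs1K; auto. apply InK. apply HpB in Hk. lia. }
      apply Hc in Hp'. apply sat_ORL in Hp'. destruct Hp' as [f [Hf Hs]].
      apply in_map_iff in Hf. destruct Hf as [y [<- Hy]]. simpl in Hs. unfold upd in Hs. simpl in Hs.
      rewrite Inys in Hy. destruct (Nat.eqb_spec y 0); [lia|]. rewrite Hs. apply in_map. rewrite Inys. auto.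
    + apply (coinc M p s1); auto. intros k Hk. destruct k as [|k]; [auto|].
      unfold tz. simpl. apply Hs1K. apply InK. apply HpB in Hk. lia.
Qed.
End Acl.

Section NegL.
Context {L : Lang} (M N : Structure L) (j : dom M -> dom N) (HE : elem_emb M N j).
Variable a : dom M.
Variable q : form L.
Hypothesis Hqfv : forall k, fv q k -> k = 0.
Hypothesis Qa : forall s, s 0 = a -> sat M s q.
Variable lq : list (dom M).
Hypothesis QM : forall s, sat M s q -> In (s 0) lq.
Variable b : dom M.
Hypothesis Hb : ~ acl0 M b.

Lemma negative (X Y : dom M -> Prop) : (forall x, X x -> x = a) -> Y b -> ~ findep M N j Y X Y.
Proof.
  intros HX HbY H.
  specialize (H 1 (fun _ => b) (fun _ => HbY) (OS OZ)).
  assert (H1 : tpRMge M N j 1 (fun _ => b) (fun x => X x \/ Y x) (OS OZ) <-> Zo (OS OZ)).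
  { apply tp_fin; auto. exists (fEq (tvar 0) (tvar 1)), (fun _ => b). split; [|split].
    - intros k Hk Hnk. simpl in Hk. right. auto.
    - simpl. rewrite asg1_0, asg_ge by lia. auto.
    - destruct (cover 1 (fun _ => [j b])) as [cl Hcl]. exists cl. intros v Hv. apply Hcl.
      intros i. simpl in Hv. rewrite asg1_0, asg_ge in Hv by lia.
      pattern i. apply Fin.caseS'; [rewrite Hv; left; auto|intro p; inversion p]. }
  simpl in H1. apply H1. apply H.
  intros p e Hover Hs. apply inf_RMge. intros l. apply NNPP. intros Hn.
  assert (Hl : forall v, sat N (asg 1 v (fun k => j (e k))) p -> In v l).
  { intros v Hv. apply NNPP. intro Hv'. apply Hn. eauto. }
  destruct (preimage M N j HE (map (fun v => v Fin.F1) l) (fun b' => sat M (asg1 b' e) p)) as [lM HlM].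
  { intros b' Hb'. apply HE in Hb'. unfold asg1 in Hb'. rewrite asg_map in Hb'.
    apply Hl in Hb'. apply (in_map (fun v => v Fin.F1)) in Hb'. exact Hb'. }
  apply Hb. apply (make_acl M a q Hqfv Qa lq QM p e b lM); auto.
Qed.
End NegL.

Section Deriv.
Variable Sigma : atom -> Prop.

Lemma proj_der u w v : derivD Sigma (u, w) -> In v w -> derivD Sigma (u, [v]).
Proof.
  intros H Hv. apply in_split in Hv. destruct Hv as [l1 [l2 ->]].
  assert (P : Permutation (v :: l1 ++ l2) (l1 ++ v :: l2)) by apply Permutation_middle.
  assert (H1 : derivD Sigma ((v :: l1 ++ l2) ++ [], [v])).
  { apply (dWeak Sigma _ [v] (l1 ++ l2) []). apply dRefl. intros _. discriminate. }
  rewrite app_nil_r in H1. apply (dPerm Sigma _ (l1 ++ v :: l2)) in H1; auto.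
  eapply dTrans; eauto. intros _; discriminate.
Qed.

Lemma union_der x w : w <> [] -> (forall v, In v w -> derivD Sigma (x, [v])) -> derivD Sigma (x, w).
Proof.
  induction w as [|v w IH]; intros Hn H; [congruence|].
  destruct w as [|v' w']. - apply H; left; auto.
  - apply (dUnion Sigma x [v] (v' :: w')); [apply H; left; auto|apply IH; [discriminate|]].
    intros v0 Hv0. apply H. right; auto.
Qed.
End Deriv.

Section Sound.
Lemma sval_fin (D : DS) (s : nat -> dcar D) x : finite_set (sval s x).
Proof. exists (map s x). intros i. unfold sval. rewrite in_map_iff. firstorder. Qed.

Lemma sval_app (D : DS) (s : nat -> dcar D) x y i : sval s (x ++ y) i <-> cup (sval s x) (sval s y) i.
Proof. unfold sval, cup. split.
  - intros [v [Hv E]]. apply in_app_or in Hv. destruct Hv; [left|right]; eauto.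
  - intros [[v [Hv E]]|[v [Hv E]]]; exists v; split; auto; apply in_or_app; auto.
Qed.

Lemma soundness (D : DS) (HD : is_DS D) (Sigma : atom -> Prop) (s : nat -> dcar D) :
  (forall a, Sigma a -> satD s a) -> forall phi, derivD Sigma phi -> satD s phi.
Proof.
  destruct HD as [D0 [D1 [D2 [D3 D4]]]]. intros HS phi H. unfold satD.
  induction H; simpl in *; [exact (HS _ H)| | | | |].
  - apply D1, sval_fin.
  - eapply D0; [intro; symmetry; apply sval_app|intro; reflexivity|].
    apply D2 with (z := sval s z); try apply sval_fin.
    eapply D0; [intro; reflexivity| apply sval_app|]. auto.
  - eapply D3; eauto; apply sval_fin.
  - eapply D0; [intro; reflexivity|intro; symmetry; apply sval_app|]. apply D4; auto; apply sval_fin.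
  - eapply D0; [|intro; reflexivity|exact IHderivD]. intro i. unfold sval.
    split; intros [v [Hv E]]; exists v; split; auto; [eapply Permutation_in; eauto|].
    eapply Permutation_in; [apply Permutation_sym|]; eauto.
Qed.
End Sound.

Theorem theorem4 (L : Lang) (T : form L -> Prop) (C : DS -> Prop) :
  countable_lang L ->
  is_theory T ->
  complete_theory T ->
  has_infinite_model T ->
  omega_stable T ->
  (forall D, C D -> is_DS D) ->
  (exists (M N : Structure L) (j : dom M -> dom N),
      model T M /\ elem_emb M N j /\ omega_saturated N /\
      (exists a, acl0 M a) /\ (exists a, ~ acl0 M a) /\
      C (forkDS M N j)) ->
  forall (Sigma : atom -> Prop) (phi : atom),
    (forall a, Sigma a -> wf_atom a) -> wf_atom phi ->
    (derivD Sigma phi <-> entailsC C Sigma phi).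
Proof.
  intros _ _ _ _ _ HC [M [N [j [HM [HE [_ [[a Ha] [[b Hb] HCf]]]]]]]] Sigma phi HSw Hphiw. split.
  - intros H D HD s HS. eapply soundness; eauto.
  - intros Hent. apply NNPP. intros Hnd. destruct phi as [x y].
    destruct (acl_facts M N j HE a Ha) as [q [lq [Hqfv [Qa [QM QN]]]]].
    set (Z := fun v => derivD Sigma (x, [v])).
    set (s := fun v => if excluded_middle_informative (Z v) then a else b).
    assert (sZ : forall v, Z v -> s v = a).
    { intros v Hv. unfold s. destruct (excluded_middle_informative (Z v)); tauto. }
    assert (snZ : forall v, ~ Z v -> s v = b).
    { intros v Hv. unfold s. destruct (excluded_middle_informative (Z v)); tauto. }
    assert (Hy : y <> []).
    { intros ->. destruct x as [|x0 x'].
      - apply Hnd. apply dRefl.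
      - unfold wf_atom in Hphiw. simpl in Hphiw. apply Hphiw; auto; discriminate. }
    assert (Hv0 : exists v, In v y /\ ~ Z v).
    { apply NNPP. intros Hn. apply Hnd. apply union_der; auto. intros v Hv.
      apply NNPP. intros Hz. apply Hn. eauto. }
    assert (HxZ : forall v, In v x -> Z v).
    { intros v Hv. unfold Z. apply (proj_der Sigma x x); auto. apply dRefl. }
    specialize (Hent (forkDS M N j) HCf s).
    assert (Hsat : forall at0, Sigma at0 -> @satD (forkDS M N j) s at0).
    { intros [u w] Hu. unfold satD; simpl.
      apply (positive M N j HE a q Hqfv Qa lq QN).
      intros y0 [v [Hv <-]].
      destruct (classic (forall v, In v u -> Z v)) as [Hall|Hnall].
      + left. apply sZ. unfold Z.
        assert (Huv : derivD Sigma (u, [v])) by (apply (proj_der Sigma u w); auto; apply dAx; auto).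
        destruct u as [|u0 u'].
        * apply (dWeak Sigma [] [v] [] x) in Huv; [exact Huv|]. intros _; simpl; discriminate.
        * apply (dTrans Sigma x (u0 :: u') [v]); [apply union_der; [discriminate|exact Hall]|exact Huv|]. intros _; simpl; discriminate.
      + destruct (classic (Z v)) as [Hz|Hz]; [left; apply sZ; auto|right].
        rewrite snZ by auto. apply NNPP. intros Hn. apply Hnall. intros v0 Hv0'.
        apply NNPP. intros Hz0. apply Hn. exists v0. split; auto. }
    specialize (Hent Hsat). unfold satD in Hent; simpl in Hent.
    apply (negative M N j HE a q Hqfv Qa lq QM b Hb (@sval (forkDS M N j) s x) (@sval (forkDS M N j) s y)); auto.
    + intros x0 [v [Hv <-]]. apply sZ, HxZ; auto.
    + destruct Hv0 as [v [Hv Hz]]. exists v. split; auto.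
Qed.
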